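(* For any finite word $e=s_1s_2\cdots s_m$ in the letters $f,g$ there is a formula \[e(z,x)=xz^m+\sum_{j=0}^m a_jz^j\] valid for all $z,x$, where each $a_j\in\{-1,0,1\}$, $a_m=0$ if $e$ ends with $f$, and $a_m=-1$ if $e$ ends with $g$. Furthermore, $a_0,a_1,\dots,a_{m-1}$ (in order) are the labels of the vertices visited, after the initial vertex, by the walk in the directed graph $\mathcal{G}$ that starts at the vertex $*$ and follows the edges labeled $s_1,s_2,\dots,s_m$ in turn. Thus the sequences $(a_0,\dots,a_{m-1})$ that occur are precisely the sequences in $\{-1,0,1\}$ whose nonzero entries alternate between $1$ and $-1$, starting with $1$. Similarly, for any right-infinite word $e$ in $f,g$, \[\pi(e,z)=\sum_{j=0}^\infty a_jz^j,\] where each $a_j\in\{-1,0,1\}$ and $a_0,a_1,\dots$ are the labels of the vertices visited (after the initial one) by the right-infinite walk in $\mathcal{G}$ from $*$ determined by $e$.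
   Context: For $z\in\mathbb{D}^*=\{0<|z|<1\}$, $f(x)=zx$ and $g(x)=z(x-1)+1$. For a finite word $e=s_1\cdots s_m$, $e(z,x)=s_1(s_2(\cdots s_m(x)))$. For a right-infinite word $e$, $\pi(e,z)=\lim_{n\to\infty}e_n(z,x)$ where $e_n$ is the prefix of length $n$ (the limit is independent of $x$). The graph $\mathcal{G}$ has five vertices: $*$ (unlabeled start), a vertex labeled $1$, a vertex labeled $-1$, and two vertices $0_f$, $0_g$ each labeled $0$. Its edges are: $*\xrightarrow{f}0_f$, $*\xrightarrow{g}1$; $0_f\xrightarrow{f}0_f$, $0_f\xrightarrow{g}1$; $1\xrightarrow{f}-1$, $1\xrightarrow{g}0_g$; $0_g\xrightarrow{g}0_g$, $0_g\xrightarrow{f}-1$; $-1\xrightarrow{f}0_f$, $-1\xrightarrow{g}1$. *)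

(* Defs.v *)
From HB Require Import structures.
From mathcomp Require Import all_boot all_order all_algebra.
From mathcomp Require Import all_classical all_reals all_analysis.
From mathcomp Require Import complex.
Set Implicit Arguments. Unset Strict Implicit. Unset Printing Implicit Defensive.
Import Order.TTheory GRing.Theory Num.Theory.
Import numFieldTopology.Exports numFieldNormedType.Exports.
Local Open Scope ring_scope.

Inductive letter := Lf | Lg.

Definition apply_letter {C : pzRingType} (z : C) (s : letter) (x : C) : C :=
  match s with
  | Lf => z * x
  | Lg => z * (x - 1) + 1
  end.

Definition eval_word {C : pzRingType} (z x : C) (e : seq letter) : C :=
  foldr (apply_letter z) x e.

Definition word_prefix (e : nat -> letter) (n : nat) : seq letter := mkseq e n.

Inductive vtx := Star | V1 | Vm1 | V0f | V0g.

(* Labels (the start vertex * is unlabeled; it is never visited after the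
   initial step, so the value given to it here is irrelevant). *)
Definition label (v : vtx) : int :=
  match v with
  | Star => 0
  | V1 => 1
  | Vm1 => -1
  | V0f => 0
  | V0g => 0
  end.

Definition step (v : vtx) (s : letter) : vtx :=
  match v, s with
  | Star, Lf => V0f
  | Star, Lg => V1
  | V0f, Lf => V0f
  | V0f, Lg => V1
  | V1, Lf => Vm1
  | V1, Lg => V0g
  | V0g, Lg => V0g
  | V0g, Lf => Vm1
  | Vm1, Lf => V0f
  | Vm1, Lg => V1
  end.

Definition walk_labels (e : seq letter) : seq int :=
  map label (scanl step Star e).

Fixpoint walk_vtx (e : nat -> letter) (n : nat) : vtx :=
  match n with
  | 0 => Star
  | n'.+1 => step (walk_vtx e n') (e n')
  end.

Definition alternating_signs (a : seq int) : bool :=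
  all (fun t => t \in [:: -1; 0; 1]) a &&
  (let b := [seq t <- a | t != 0] in b == mkseq (fun i => (-1) ^+ i) (size b)).

Local Open Scope complex_scope.
HB.instance Definition _ (R : rcfType) := PseudoPointedMetric.copy R[i] (R[i])^o.
HB.instance Definition _ (R : rcfType) := NormedModule.copy R[i] (R[i])^o.

(* Main.v *)
Require Import Defs.
From HB Require Import structures.
From mathcomp Require Import all_boot all_order all_algebra.
From mathcomp Require Import all_classical all_reals all_analysis.
From mathcomp Require Import complex.
From mathcomp Require Import ring.
Import Order.TTheory GRing.Theory Num.Theory.
Import numFieldTopology.Exports numFieldNormedType.Exports.
Local Open Scope ring_scope.
Local Open Scope complex_scope.
Local Open Scope classical_set_scope.

Definition endc (e : seq letter) : int := if last Lf e is Lg then -1 else 0.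
Definition coefs (e : seq letter) : seq int := rcons (walk_labels e) (endc e).

Lemma walk_labels_rcons e s :
  walk_labels (rcons e s) = rcons (walk_labels e) (label (step (foldl step Star e) s)).
Proof. by rewrite /walk_labels scanl_rcons map_rcons foldl_rcons. Qed.

Lemma size_walk_labels e : size (walk_labels e) = size e.
Proof. by rewrite /walk_labels size_map size_scanl. Qed.

Lemma label_step e s :
  label (step (foldl step Star e) s) = endc e + (if s is Lg then 1 else 0).
Proof.
elim/last_ind: e => [|e s' _]; first by case: s.
rewrite foldl_rcons /endc last_rcons.
by case: (foldl step Star e); case: s'; case: s.
Qed.

Lemma eval_coefs (C : comNzRingType) (e : seq letter) (z x : C) :
  eval_word z x e = x * z ^+ (size e)
     + \sum_(j < (size e).+1) (nth 0 (coefs e) j)%:~R * z ^+ j.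
Proof.
elim/last_ind: e x => [|e s IH] x.
  by rewrite /eval_word /= big_ord_recr big_ord0 /= expr0 mulr1 mul0r !add0r addr0.
rewrite /eval_word foldr_rcons -/(eval_word _ _ e) IH size_rcons.
rewrite big_ord_recr /= big_ord_recr /= [in RHS]big_ord_recr /=.
have Hj : forall j : 'I_(size e),
   (nth 0 (coefs (rcons e s)) j)%:~R * z ^+ j = (nth 0 (coefs e) j)%:~R * z ^+ j :> C.
  move=> j; rewrite /coefs walk_labels_rcons !nth_rcons !size_rcons size_walk_labels ltn_ord.
  by rewrite (ltn_trans (ltn_ord j)).
rewrite (eq_bigr _ (fun j _ => Hj j)).
rewrite /coefs walk_labels_rcons !nth_rcons !size_rcons size_walk_labels ltnn eqxx ltnSn.
rewrite ltnn eqxx label_step /endc last_rcons -/(endc e).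
clear Hj; case: s => /=.
  rewrite addr0 exprS; ring.
rewrite intrD exprS; ring.
Qed.
Fixpoint alt_from (ex : int) (a : seq int) : bool :=
  match a with
  | [::] => true
  | t :: a' => if t == 0 then alt_from ex a' else (t == ex) && alt_from (- ex) a'
  end.

Lemma mkseq_shift (f : nat -> int) n :
  mkseq f n.+1 = f 0%N :: mkseq (fun i => f i.+1) n.
Proof.
rewrite /mkseq /=; congr (_ :: _).
have -> : iota 1 n = map (addn 1) (iota 0 n) by rewrite -iotaDl.
by rewrite -map_comp.
Qed.

Lemma alt_fromE (ex : int) a : (ex = 1 \/ ex = -1) ->
  ([seq t <- a | t != 0] == mkseq (fun i => ex * (-1) ^+ i) (size [seq t <- a | t != 0]))
  = alt_from ex a.
Proof.
elim: a ex => [|t a IH] ex Hex //=.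
have [->|tn0] := eqVneq t 0; first by rewrite /= IH.
rewrite /= mkseq_shift eqseq_cons expr0 mulr1.
have -> : (fun i => ex * (-1) ^+ i.+1) = (fun i => (- ex) * (-1) ^+ i).
  by apply: funext => i; rewrite exprS mulrA mulrN1.
by rewrite IH //; case: Hex => ->; [right|left].
Qed.

Lemma alternatingE a :
  alternating_signs a = all (fun t => t \in [:: -1; 0; 1]) a && alt_from 1 a.
Proof.
rewrite /alternating_signs; congr (_ && _).
rewrite -(@alt_fromE 1 a (or_introl erefl)).
by congr (_ == _); apply: eq_mkseq => i; rewrite mul1r.
Qed.

Definition expv (v : vtx) : int :=
  match v with Star | V0f | Vm1 => 1 | V1 | V0g => -1 end.

Definition wl (v : vtx) (e : seq letter) := map label (scanl step v e).

Lemma wl_alt v e : alt_from (expv v) (wl v e).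
Proof.
elim: e v => [|s e IH] v //=.
by case: v; case: s => /=; apply: IH.
Qed.

Lemma wl_in v e : all (fun t => t \in [:: -1; 0; 1]) (wl v e).
Proof.
rewrite /wl; elim: (scanl step v e) => //= w l ->.
by case: w.
Qed.

Lemma wl_surj a v : all (fun t => t \in [:: -1; 0; 1]) a -> alt_from (expv v) a ->
  exists e, wl v e = a.
Proof.
elim: a v => [|t a IH] v; first by exists [::].
rewrite /= => /andP [Ht Ha].
move: Ht; rewrite !inE; case/or3P => /eqP -> /=.
- case: v => //= Hal.
  + have [e <-] := IH Vm1 Ha Hal; by exists (Lf :: e); rewrite /wl.
  + have [e <-] := IH Vm1 Ha Hal; by exists (Lf :: e); rewrite /wl.
- case: v => /= Hal.
  + have [e <-] := IH V0f Ha Hal; by exists (Lf :: e); rewrite /wl.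
  + have [e <-] := IH V0g Ha Hal; by exists (Lg :: e); rewrite /wl.
  + have [e <-] := IH V0f Ha Hal; by exists (Lf :: e); rewrite /wl.
  + have [e <-] := IH V0f Ha Hal; by exists (Lf :: e); rewrite /wl.
  + have [e <-] := IH V0g Ha Hal; by exists (Lg :: e); rewrite /wl.
- case: v => //= Hal.
  + have [e <-] := IH V1 Ha Hal; by exists (Lg :: e); rewrite /wl.
  + have [e <-] := IH V1 Ha Hal; by exists (Lg :: e); rewrite /wl.
  + have [e <-] := IH V1 Ha Hal; by exists (Lg :: e); rewrite /wl.
Qed.

Lemma part2 (a : seq int) :
  (exists e : seq letter, walk_labels e = a) <-> alternating_signs a.
Proof.
rewrite alternatingE; split.
  by move=> [e <-]; rewrite (wl_in Star e) (wl_alt Star e).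
by move=> /andP [H1 H2]; have [e He] := @wl_surj a Star H1 H2; exists e.
Qed.
Section Cx.
Variable R : realType.

Lemma normC_re (w : R[i]) : `|w| = (complex.Re `|w|)%:C.
Proof. by rewrite normc_def. Qed.

Lemma normRc (k : R) : `|k%:C| = `|k|%:C :> R[i].
Proof. by rewrite normc_def /= expr0n /= addr0 sqrtr_sqr. Qed.

Lemma normi : `|'i%C| = 1 :> R[i].
Proof. by rewrite normc_def /= expr0n /= add0r expr1n sqrtr1. Qed.

Lemma Im_le (w : R[i]) : (`|complex.Im w|)%:C <= `|w|.
Proof.
have -> : complex.Im w = - complex.Re (w * 'i%C) by rewrite ReiNIm opprK.
by rewrite normrN (le_trans (normc_ge_Re _)) // normrM normi mulr1.
Qed.

Lemma split_le (w : R[i]) : `|w| <= (`|complex.Re w| + `|complex.Im w|)%:C.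
Proof.
rewrite {1}(complexE w) rmorphD /=.
by rewrite (le_trans (ler_normD _ _)) // normrM normi mul1r !normRc.
Qed.

Lemma transfer (u : nat -> R[i]) (l : R[i]) (r : nat -> R) :
  (forall n, `|l - u n| <= (r n)%:C) ->
  (forall eps : R, 0 < eps -> \forall n \near \oo, r n < eps) ->
  u @ \oo --> l.
Proof.
move=> Hb Hr; apply/cvgrPdist_lt => eps eps0.
have Heps : eps = (complex.Re eps)%:C.
  move: eps0; rewrite ltcE => /andP [/eqP Him _].
  by rewrite {1}(complexE eps) Him /= rmorph0 mulr0 addr0.
have Re0 : 0 < complex.Re eps by move: eps0; rewrite {1}Heps -ltcR.
near=> n; rewrite (le_lt_trans (Hb n)) // Heps ltcR.
by near: n; apply: Hr.
Unshelve. all: by end_near. Qed.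


Lemma norm_ri (a b : R) : `|a%:C + 'i%C * b%:C| <= (`|a| + `|b|)%:C.
Proof.
by rewrite rmorphD (le_trans (ler_normD _ _)) // normrM normi mul1r !normRc.
Qed.

Lemma series_exists (z : R[i]) (w : nat -> R[i]) : `|z| < 1 ->
  (forall j, `|w j| <= `|z| ^+ j) -> exists l : R[i], series w @ \oo --> l.
Proof.
move=> z1 Hw.
set rho := complex.Re `|z|.
have Hz : `|z| = rho%:C by apply: normC_re.
have rho0 : 0 <= rho by have := normr_ge0 z; rewrite Hz ler0c.
have rho1 : rho < 1 by move: z1; rewrite Hz -(rmorph1 (real_complex R)) ltcR.
have bound : forall f : nat -> R, (forall j, (`|f j|)%:C <= `|w j|) -> cvgn (series f).
  move=> f Hf; apply: normed_cvg.
  apply: (@series_le_cvg _ _ (geometric 1 rho)).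
  - by move=> n; rewrite normr_ge0.
  - by move=> n; rewrite /geometric /= mul1r exprn_ge0.
  - move=> n; rewrite /geometric /= mul1r -lecR (le_trans (Hf n)) //.
    by rewrite rmorphXn -[X in X ^+ n]/(rho%:C) -Hz Hw.
  - by apply: is_cvg_geometric_series; rewrite ger0_norm.
pose fr j := complex.Re (w j).
pose fi j := complex.Im (w j).
have Cr : cvgn (series fr) by apply: bound => j; apply: normc_ge_Re.
have Ci : cvgn (series fi) by apply: bound => j; apply: Im_le.
exists ((limn (series fr))%:C + 'i%C * (limn (series fi))%:C).
apply: (@transfer (series w) _ (fun n => `|limn (series fr) - series fr n| + `|limn (series fi) - series fi n|)).
- move=> n.
  have -> : series w n = (series fr n)%:C + 'i%C * (series fi n)%:C.
    rewrite !seriesEord /= rmorph_sum rmorph_sum mulr_sumr -big_split /=.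
    by apply: eq_bigr => j _; rewrite -complexE.
  rewrite opprD addrACA -mulrBr -!rmorphB.
  exact: norm_ri.
- move=> eps eps0.
  near=> n; rewrite (splitr eps) ltrD //; near: n.
  + by apply: cvgr_dist_lt; [apply: Cr | rewrite divr_gt0].
  + by apply: cvgr_dist_lt; [apply: Ci | rewrite divr_gt0].
Unshelve. all: by end_near. Qed.


Lemma dummy_ : True. Proof. by []. Qed.
Lemma prefix_walk (e : nat -> letter) n :
  foldl step Star (word_prefix e n) = walk_vtx e n /\
  walk_labels (word_prefix e n) = mkseq (fun j => label (walk_vtx e j.+1)) n.
Proof.
elim: n => [|n [IH1 IH2]] //.
by rewrite /word_prefix mkseqS foldl_rcons walk_labels_rcons -/(word_prefix e n) IH1 IH2 mkseqS.
Qed.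

Lemma part3 (e : nat -> letter) (z : R[i]) : 0 < `|z| < 1 ->
     exists a : nat -> int,
       [/\ forall j, a j \in [:: -1; 0; 1],
           forall j, a j = label (walk_vtx e j.+1)
         & exists l : R[i],
             series (fun j => (a j)%:~R * z ^+ j) @ \oo --> l /\
             forall x : R[i], (fun n : nat => eval_word z x (word_prefix e n)) @ \oo --> l].
Proof.
move=> /andP [z0 z1].
pose a j := label (walk_vtx e j.+1).
exists a; split => //.
  by move=> j; rewrite /a; case: (walk_vtx e j.+1).
pose w j := (a j)%:~R * z ^+ j.
have [l Hl] : exists l : R[i], series w @ \oo --> l.
  apply: series_exists z1 _ => j.
  rewrite /w normrM normrX /a.
  by case: (walk_vtx e j.+1) => /=; rewrite ?normrN ?normr1 ?normr0 ?mul1r ?mul0r ?exprn_ge0.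
exists l; split => // x.
set rho := complex.Re `|z|.
have Hz : `|z| = rho%:C by apply: normC_re.
have rho0 : 0 <= rho by have := normr_ge0 z; rewrite Hz ler0c.
have rho1 : rho < 1 by move: z1; rewrite Hz -(rmorph1 (real_complex R)) ltcR.
pose c n : R[i] := (endc (word_prefix e n))%:~R.
have Ev : (fun n => eval_word z x (word_prefix e n)) =
          (fun n => series w n + (x + c n) * z ^+ n).
  apply: funext => n; rewrite eval_coefs big_ord_recr /=.
  have [_ Hw] := prefix_walk e n.
  have Hs : size (word_prefix e n) = n by rewrite /word_prefix size_mkseq.
  rewrite Hs /= seriesEord /= /coefs Hw nth_rcons size_mkseq ltnn eqxx.
  have -> : \sum_(i < n) (nth 0 (rcons (mkseq (fun j => label (walk_vtx e j.+1)) n)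
        (endc (word_prefix e n))) i)%:~R * z ^+ i = \sum_(i < n) w i.
    apply: eq_bigr => i _; rewrite nth_rcons size_mkseq ltn_ord nth_mkseq //.
  rewrite /c; ring.
suff H0 : (fun n => (x + c n) * z ^+ n) @ \oo --> (0 : R[i]).
  by rewrite Ev; have := cvgD Hl H0; rewrite addr0; apply.
pose K := complex.Re `|x| + 1.
have K0 : 0 < K by rewrite /K ltr_pwDr // -ler0c -normC_re normr_ge0.
apply: (@transfer (fun n => (x + c n) * z ^+ n) 0 (fun n => K * rho ^+ n)).
- move=> n; rewrite sub0r normrN normrM normrX Hz.
  rewrite rmorphM rmorphXn /=.
  rewrite ler_wpM2r //; first by rewrite exprn_ge0 // ler0c.
  have -> : K%:C = `|x| + 1.
    by rewrite [in RHS]normC_re /K; apply/eqP; rewrite eq_complex /= addr0 !eqxx.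
  rewrite (le_trans (ler_normD _ _)) // lerD2l.
  rewrite /c; have [->|->] : endc (word_prefix e n) = 0 \/ endc (word_prefix e n) = -1.
    + by rewrite /endc; case: (last _ _); [left|right].
    + by rewrite normr0.
    + by rewrite (intrN R[i] 1) normrN normr1.
- move=> eps eps0.
  have He : 0 < eps / K by rewrite divr_gt0.
  have := @cvg_expr R rho; rewrite ger0_norm // => /(_ rho1) Hc.
  near=> n.
  rewrite mulrC -ltr_pdivlMr //.
  apply: le_lt_trans (ler_norm _) _.
  near: n; exact: (cvgr0_norm_lt _ Hc _ He).
Unshelve. all: by end_near. Qed.

End Cx.

Theorem proposition4p2p1 (R : realType) :
  (* finite words *)
  (forall e : seq letter, exists a : seq int,
     [/\ size a = (size e).+1,
         all (fun t => t \in [:: -1; 0; 1]) a,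
         (forall (e' : seq letter) (s : letter), e = rcons e' s ->
             nth 0 a (size e) = (if s is Lf then 0 else -1)),
         take (size e) a = walk_labels e
       & forall z x : R[i],
           eval_word z x e = x * z ^+ (size e)
                             + \sum_(j < (size e).+1) (nth 0 a j)%:~R * z ^+ j])
  /\
  (* the label sequences that occur are exactly the alternating ones *)
  (forall a : seq int,
     (exists e : seq letter, walk_labels e = a) <-> alternating_signs a)
  /\
  (* right-infinite words *)
  (forall (e : nat -> letter) (z : R[i]), 0 < `|z| < 1 ->
     exists a : nat -> int,
       [/\ forall j, a j \in [:: -1; 0; 1],
           forall j, a j = label (walk_vtx e j.+1)
         & exists l : R[i],
             series (fun j => (a j)%:~R * z ^+ j) @ \oo --> l /\
             forall x : R[i], (fun n : nat => eval_word z x (word_prefix e n)) @ \oo --> l]).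
Proof.
split; last split.
- move=> e; exists (coefs e); split.
  + by rewrite /coefs size_rcons size_walk_labels.
  + rewrite /coefs all_rcons (wl_in Star e) andbT /endc.
    by case: (last Lf e).
  + move=> e' s ->; rewrite /coefs nth_rcons size_walk_labels ltnn eqxx /endc last_rcons.
    by case: s.
  + by rewrite /coefs -cats1 take_size_cat // size_walk_labels.
  + by move=> z x; apply: eval_coefs.
- exact: part2.
- exact: part3.
Qed.
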